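(* Let $h\ge 2$ be an integer and let $O$ be a finite set of next hops with $\delta=|O|$ and probability distribution $(p_o)_{o\in O}$, with entropy $H_O=\sum_{o\in O} p_o\log_2\frac{1}{p_o}$. Let $T$ be the complete binary trie of height $h$ whose $2^h$ leaves are labeled independently with next hop $o$ with probability $p_o$, let $D$ be the DAG obtained from $T$ by trie-folding, and let $V^j_D$ be the set of nodes of $D$ at level $j$. For $1\le j\le h$ put $\beta_j=\min\{\frac{H_O}{h-j}2^h+3,\,2^{h-j},\,\delta^{2^j}\}$ (with the first term $+\infty$ for $j=h$), let $k^*\in\{1,\dots,h\}$ be a level at which $\beta_j$ attains its maximum, and suppose each node of $D$ is stored using $2(h-k^* )$ bits. Then for every level $j=1,\dots,h$ the expected number of bits needed to store the nodes of $D$ at level $j$, namely $2(h-k^* )\,E(|V^j_D|)$, is at most \[\mathcal{M}=2 H_O 2^{h} + 6h.\]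
   Context: Levels: the level of a node of $T$ is $h$ minus its distance from the root; the root has level $h$, leaves level $0$, and level $j$ has $2^{h-j}$ nodes, each the root of a subtrie of height $j$ with $2^j$ labeled leaves. Trie-folding merges nodes whose rooted subtries are identical (same structure and same leaf next-hop labels), producing a DAG $D$; the nodes of $D$ at level $j$ correspond to the distinct leaf-label strings of length $2^j$ among the $2^{h-j}$ level-$j$ subtries. Each node of $D$ stores two child pointers of $h-k^*$ bits each. *)

(* Defs.v *)
From HB Require Import structures.
From mathcomp Require Import all_boot all_order all_algebra.
From mathcomp Require Import reals exp.
Set Implicit Arguments. Unset Strict Implicit. Unset Printing Implicit Defensive.
Import Order.TTheory GRing.Theory Num.Theory.
Local Open Scope ring_scope.

Section TrieFolding.
Variables (R : realType) (O : finType).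

Definition log2 (x : R) : R := ln x / ln 2.

Definition entropy (p : O -> R) : R :=
  \sum_(o : O) (if p o == 0 then 0 else p o * log2 (p o)^-1).

Definition leaves (h : nat) (l : {ffun 'I_(2 ^ h) -> O}) : seq O :=
  [seq l i | i <- enum 'I_(2 ^ h)].

Definition subtrie_labels (h j : nat) (l : {ffun 'I_(2 ^ h) -> O}) (b : nat)
  : seq O := take (2 ^ j) (drop (b * 2 ^ j) (leaves l)).

(* |V^j_D| : number of nodes of the folded DAG D at level j, i.e. the number
   of distinct leaf-label strings among the 2^(h-j) level-j subtries *)
Definition nodes_at_level (h j : nat) (l : {ffun 'I_(2 ^ h) -> O}) : nat :=
  size (undup [seq subtrie_labels j l b | b <- iota 0 (2 ^ (h - j))]).

Definition labeling_prob (p : O -> R) (h : nat) (l : {ffun 'I_(2 ^ h) -> O}) : R :=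
  \prod_(i : 'I_(2 ^ h)) p (l i).

Definition expected_nodes (p : O -> R) (h j : nat) : R :=
  \sum_(l : {ffun 'I_(2 ^ h) -> O}) labeling_prob p l * (nodes_at_level j l)%:R.

Definition beta (p : O -> R) (h j : nat) : R :=
  let second_third := Num.min ((2 : R) ^+ (h - j)) ((#|O|%:R : R) ^+ (2 ^ j)) in
  if (j < h)%N then
    Num.min (entropy p / (h - j)%:R * 2 ^+ h + 3) second_third
  else second_third.

End TrieFolding.

(* Main.v *)
Require Import Defs.
From HB Require Import structures.
From mathcomp Require Import all_boot all_order all_algebra.
From mathcomp Require Import reals exp sequences.
From mathcomp Require Import ring lra.
Import Order.TTheory GRing.Theory Num.Theory.
Local Open Scope ring_scope.
Set Implicit Arguments. Unset Strict Implicit. Unset Printing Implicit Defensive.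

Section Gen.
Variables (R : realType) (O : finType) (p : O -> R).
Hypothesis p0 : forall o, 0 <= p o.
Hypothesis p1 : \sum_(o : O) p o = 1.

Lemma margF (I : finType) (F : I -> O -> R) :
  \sum_(f : {ffun I -> O}) \prod_i F i (f i) = \prod_i \sum_o F i o.
Proof. by rewrite bigA_distr_bigA. Qed.

Lemma wsum (I : finType) : \sum_(f : {ffun I -> O}) \prod_i p (f i) = 1.
Proof. by rewrite (@margF I (fun _ o => p o)) big1. Qed.

Lemma wge0 (I : finType) (f : {ffun I -> O}) : 0 <= \prod_i p (f i).
Proof. by apply: prodr_ge0 => i _. Qed.

Lemma marg1 (I : finType) (i0 : I) (g : O -> R) :
  \sum_(f : {ffun I -> O}) (\prod_i p (f i)) * g (f i0) = \sum_o p o * g o.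
Proof.
transitivity (\sum_(f : {ffun I -> O}) \prod_i (p (f i) * (if i == i0 then g (f i) else 1))).
  apply: eq_bigr => f _; rewrite big_split /=.
  rewrite [X in _ = _ * X](bigD1 i0) //= eqxx [X in _ = _ * (_ * X)]big1 ?mulr1 //.
  by move=> i /negPf ->.
rewrite (@margF I (fun i o => p o * (if i == i0 then g o else 1))).
rewrite (bigD1 i0) //= [X in _ * X]big1 ?mulr1; first by apply: eq_bigr => o _; rewrite eqxx.
move=> i /negPf Hi; under eq_bigr do rewrite Hi mulr1; exact: p1.
Qed.

End Gen.
Lemma third_le_expRN1 (R : realType) : 3^-1 <= expR (-1 : R).
Proof.
have -> : (-1 : R) = 8%:R * (- 8^-1) by field.
rewrite expRM_natl.
apply: (@le_trans _ _ ((1 - 8^-1) ^+ 8)).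
  rewrite -subr_ge0. by rewrite !exprS expr0; lra.
apply: lerXn2r; rewrite ?nnegrE; first lra.
  exact: expR_ge0.
exact: expR_ge1Dx.
Qed.

Lemma core (R : realType) (n P : R) : 0 <= P -> P <= 1 -> 1 < n ->
  (1 <= n * P * (- ln P) / ln n + 3 * P) \/ (n * P <= n * P * (- ln P) / ln n + 3 * P).
Proof.
move=> P0 P1 n1.
have L0 : 0 < ln n by apply: ln_gt0.
have n0 : 0 < n by lra.
have [->|Pn0] := eqVneq P 0; first by right; rewrite !(mulr0, mul0r); lra.
have Pp : 0 < P by rewrite lt_def Pn0.
have [nP1|nP1] := lerP (n * P) 1.
  right.
  have : ln n <= - ln P.
    rewrite -lnV ?posrE //. rewrite ler_ln ?posrE ?invr_gt0 //.
    by rewrite -(ler_pM2r Pp) mulVf //.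
  move=> H.
  have : n * P * ln n <= n * P * (- ln P) by apply: ler_wpM2l => //; apply: mulr_ge0; lra.
  move=> H2.
  have : n * P <= n * P * (- ln P) / ln n.
    by rewrite ler_pdivlMr //.
  move=> H3. have : 0 <= 3 * P by lra. lra.
left.
have [P3|P3] := lerP (3^-1) P; first by 
  have : 0 <= n * P * (- ln P) / ln n;
  [ apply: divr_ge0; last lra; apply: mulr_ge0; [apply: mulr_ge0; lra|];
    rewrite oppr_ge0; exact: ln_le0 | lra].
have a1 : 1 <= - ln P.
  rewrite lerNr. rewrite -[X in _ <= X]expRK. rewrite ler_ln ?posrE ?expR_gt0 //.
  have := @third_le_expRN1 R; lra.
set a := - ln P.
set b := ln (n * P).
have b0 : 0 <= b by apply: ln_ge0; lra.
have eb : n * P = expR b by rewrite /b lnK // posrE; apply: mulr_gt0.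
have Lab : ln n = a + b by rewrite /b lnM ?posrE // /a; ring.
have : 1 + b <= n * P by rewrite eb; exact: expR_ge1Dx.
move=> H.
have : ln n <= n * P * a.
  have a1' : 1 <= a by [].
  rewrite Lab. apply: (@le_trans _ _ ((1 + b) * a)).
    by rewrite mulrDl mul1r; nra.
  apply: ler_wpM2r; lra.
move=> H2.
have : 1 <= n * P * a / ln n by rewrite ler_pdivlMr // mul1r.
lra.
Qed.
Section Gen2.
Variables (R : realType) (O : finType) (p : O -> R).
Hypothesis p0 : forall o, 0 <= p o.
Hypothesis p1 : \sum_(o : O) p o = 1.

Lemma ln_prod (I : finType) (F : I -> R) : (forall i, 0 < F i) ->
  ln (\prod_i F i) = \sum_i ln (F i).
Proof.
move=> H.
have -> : \prod_i F i = \prod_i expR (ln (F i)).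
  by apply: eq_bigr => i _; rewrite lnK // posrE.
by rewrite -expR_sum expRK.
Qed.

Lemma string_ent (I : finType) :
  \sum_(s : {ffun I -> O}) (\prod_k p (s k)) * (- ln (\prod_k p (s k)))
  = #|I|%:R * \sum_o p o * (- ln (p o)).
Proof.
transitivity (\sum_(s : {ffun I -> O}) \sum_k (\prod_k p (s k)) * (- ln (p (s k)))).
  apply: eq_bigr => s _.
  have [->|Pn0] := eqVneq (\prod_k p (s k)) 0.
    by rewrite mul0r big1 // => k _; rewrite mul0r.
  have pos : forall k, 0 < p (s k).
    move=> k; rewrite lt_def p0 andbT; apply: contraNneq Pn0 => e.
    by rewrite (bigD1 k) //= e mul0r.
  by rewrite ln_prod // -sumrN mulr_sumr.
rewrite exchange_big /=.
under eq_bigr do rewrite (@marg1 _ _ p p1 _ _ (fun o => - ln (p o))).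
by rewrite sumr_const mulr_natl.
Qed.
End Gen2.
Section Blocks.
Variables (O : finType) (o0 : O) (h j : nat).
Hypothesis jh : (j <= h)%N.
Local Notation N := (2 ^ h)%N.
Local Notation m := (2 ^ j)%N.
Local Notation n := (2 ^ (h - j))%N.
Local Notation LF := ({ffun 'I_N -> O}).

Lemma nmN : (n * m = N)%N.
Proof. by rewrite -expnD subnK. Qed.

Lemma m_gt0 : (0 < m)%N. Proof. by rewrite expn_gt0. Qed.

Definition lf (l : LF) (i : nat) := nth o0 (leaves l) i.

Lemma size_leaves (l : LF) : size (leaves l) = N.
Proof. by rewrite size_map size_enum_ord. Qed.

Lemma leafE (l : LF) (i : 'I_N) : lf l i = l i.
Proof. by rewrite /lf (nth_map i) ?size_enum_ord // nth_ord_enum. Qed.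

Lemma blk_fit b k : (b < n)%N -> (k < m)%N -> (b * m + k < N)%N.
Proof.
move=> bn km; rewrite -nmN.
apply: (@leq_trans (b * m + m)); first by rewrite ltn_add2l.
by rewrite -mulSnr leq_mul2r bn orbT.
Qed.

Lemma blkE (l : LF) b : (b < n)%N ->
  subtrie_labels j l b = [seq lf l (b * m + k) | k <- iota 0 m].
Proof.
move=> bn.
have szd : (m <= size (drop (b * m) (leaves l)))%N.
  have bmN : (b * m + m <= N)%N by rewrite -nmN -mulSnr leq_mul2r bn orbT.
  rewrite size_drop size_leaves leq_subRL //.
  by apply: leq_trans bmN; apply: leq_addr.
apply: (@eq_from_nth _ o0).
  by rewrite size_map size_iota size_take; case: ltngtP szd.
move=> k; rewrite size_take.
have -> : (if (m < size (drop (b * m) (leaves l)))%N then m else size (drop (b * m) (leaves l))) = m.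
  by case: ltngtP szd.
move=> km.
by rewrite nth_take // nth_drop (nth_map 0%N) ?size_iota // nth_iota.
Qed.

Definition tos (s : {ffun 'I_m -> O}) : seq O := [seq s k | k <- enum 'I_m].

Lemma size_tos s : size (tos s) = m.
Proof. by rewrite size_map size_enum_ord. Qed.

Lemma nth_tos s (k : 'I_m) : nth o0 (tos s) k = s k.
Proof. by rewrite (nth_map k) ?size_enum_ord // nth_ord_enum. Qed.

Lemma tos_inj : injective tos.
Proof.
move=> s1 s2 e; apply/ffunP => k.
by rewrite -!nth_tos e.
Qed.

Lemma tosE s : tos s = [seq nth o0 (tos s) k | k <- iota 0 m].
Proof. by rewrite -{1}(mkseq_nth o0 (tos s)) size_tos. Qed.

Lemma blk_range (l : LF) b : (b < n)%N ->
  subtrie_labels j l b = tos [ffun k : 'I_m => lf l (b * m + k)].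
Proof.
move=> bn; rewrite blkE // /tos -val_enum_ord -map_comp.
by apply: eq_map => k /=; rewrite ffunE.
Qed.

Definition Xs (l : LF) := [seq subtrie_labels j l b | b <- iota 0 n].

Lemma count_bound (l : LF) :
  (nodes_at_level j l <= #|[pred s | tos s \in Xs l]|)%N.
Proof.
rewrite /nodes_at_level -/(Xs l).
set S := enum [pred s | tos s \in Xs l].
rewrite cardE -/S -(size_map tos).
apply: uniq_leq_size; first exact: undup_uniq.
move=> x; rewrite mem_undup => xX.
have := xX; rewrite /Xs => /mapP [b]; rewrite mem_iota add0n => bn ->.
rewrite blk_range //; apply: map_f.
by rewrite mem_enum inE -blk_range // map_f // mem_iota.
Qed.

Lemma count_le_n (l : LF) : (nodes_at_level j l <= n)%N.
Proof. by rewrite /nodes_at_level; apply: leq_trans (size_undup _) _; rewrite size_map size_iota. Qed.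

Lemma count_le_delta (l : LF) : (nodes_at_level j l <= #|O| ^ m)%N.
Proof.
apply: leq_trans (count_bound l) _.
have := card_ffun ('I_m) O; rewrite card_ord => <-; exact: max_card.
Qed.

End Blocks.
Lemma prod_window (R : realType) (a c N : nat) (H : nat -> R) : (a + c <= N)%N ->
  \prod_(0 <= i < N) (if (a <= i < a + c)%N then H (i - a)%N else 1)
  = \prod_(0 <= k < c) H k.
Proof.
move=> acN.
rewrite (@big_cat_nat _ _ _ a) //=; last by apply: leq_trans acN; apply: leq_addr.
rewrite (@big_cat_nat _ _ _ (a + c) a) //=; last by apply: leq_addr.
rewrite big1_seq ?mul1r; last first.
  by move=> i /andP [_]; rewrite mem_index_iota => /andP [_ ia]; rewrite leqNgt ia.
rewrite [X in _ * X]big1_seq ?mulr1; last first.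
  move=> i /andP [_]; rewrite mem_index_iota => /andP [ai _].
  by rewrite ltnNge ai andbF.
rewrite -{1}[a]add0n big_addn addKn.
apply: eq_big_nat => i /andP [_ ic].
by rewrite addnK leq_addl /= addnC ltn_add2l ic.
Qed.

Section Marg.
Variables (R : realType) (O : finType) (p : O -> R) (o0 : O) (h j : nat).
Hypothesis p0 : forall o, 0 <= p o.
Hypothesis p1 : \sum_(o : O) p o = 1.
Hypothesis jh : (j <= h)%N.
Local Notation N := (2 ^ h)%N.
Local Notation m := (2 ^ j)%N.
Local Notation n := (2 ^ (h - j))%N.
Local Notation LF := ({ffun 'I_N -> O}).

Lemma block_marg b (s : {ffun 'I_m -> O}) : (b < n)%N ->
  \sum_(l : LF) labeling_prob p l * (subtrie_labels j l b == tos s)%:R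
  = \prod_k p (s k).
Proof.
move=> bn.
pose e (i : nat) (o : O) : bool :=
  if (b * m <= i < b * m + m)%N then o == nth o0 (tos s) (i - b * m) else true.
have bmN : (b * m + m <= N)%N by rewrite -(nmN jh) -mulSnr leq_mul2r bn orbT.
have ev : forall l : LF, (subtrie_labels j l b == tos s) = [forall i : 'I_N, e i (l i)].
  move=> l; rewrite (blkE o0 jh) // (tosE o0).
  apply/eqP/forallP.
    move=> /eq_in_map E i; rewrite /e; case: ifP => // /andP [bi ib].
    have k_in : (i - b * m)%N \in iota 0 m by rewrite mem_iota add0n ltn_subLR.
    by rewrite -E // subnKC //; apply/eqP; rewrite (@leafE O o0 h l i).
  move=> A; apply/eq_in_map => k; rewrite mem_iota add0n => km.
  have := A (Ordinal (blk_fit jh bn km)); rewrite /e /= leq_addr ltn_add2l km /=.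
  by rewrite addKn => /eqP <-; rewrite -(leafE o0).
transitivity (\sum_(l : LF) \prod_(i : 'I_N) (p (l i) * (e i (l i))%:R)).
  apply: eq_bigr => l _; rewrite big_split /= ev; congr (_ * _).
  case: forallP => [A|/forallP]; first by rewrite big1 // => i _; rewrite A.
  rewrite negb_forall => /existsP [i /negPf Ei].
  by rewrite (bigD1 i) //= Ei mul0r.
rewrite (margF (fun (i : 'I_N) o => p o * (e i o)%:R)).
transitivity (\prod_(i : 'I_N) (if (b * m <= i < b * m + m)%N then p (nth o0 (tos s) (i - b * m)) else 1)).
  apply: eq_bigr => i _; rewrite /e; case: ifP => _.
    rewrite (bigD1 (nth o0 (tos s) (i - b * m))) //= eqxx mulr1 big1 ?addr0 //.
    by move=> o /negPf ->; rewrite mulr0.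
  by under eq_bigr do rewrite mulr1.
rewrite -(big_mkord xpredT (fun i => if (b * m <= i < b * m + m)%N then p (nth o0 (tos s) (i - b * m)) else 1)).
rewrite (prod_window (fun k => p (nth o0 (tos s) k)) bmN) big_mkord.
by apply: eq_bigr => k _; rewrite nth_tos.
Qed.

End Marg.
Lemma mem_le_sum (R : realType) (T : eqType) (U : Type) (f : U -> T) (r : seq U) x :
  ((x \in map f r)%:R : R) <= \sum_(b <- r) ((f b == x)%:R : R).
Proof.
elim: r => [|a r IH]; first by rewrite big_nil.
rewrite big_cons /= in_cons eq_sym.
case: (f a == x) => /=.
  rewrite -[X in X <= _]addr0; apply: lerD => //.
  by apply: sumr_ge0 => b _; rewrite ler0n.
by rewrite add0r.
Qed.

Lemma card_sum (R : realType) (I : finType) (A : pred I) :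
  ((#|A|)%:R : R) = \sum_i ((i \in A)%:R : R).
Proof.
rewrite -sum1_card natr_sum big_mkcond /=.
by apply: eq_bigr => i _; case: (i \in A).
Qed.

Section Main.
Variables (R : realType) (O : finType) (p : O -> R) (o0 : O) (h j : nat).
Hypothesis p0 : forall o, 0 <= p o.
Hypothesis p1 : \sum_(o : O) p o = 1.
Hypothesis jh : (j <= h)%N.
Local Notation N := (2 ^ h)%N.
Local Notation m := (2 ^ j)%N.
Local Notation n := (2 ^ (h - j))%N.
Local Notation LF := ({ffun 'I_N -> O}).

Lemma E_le_c (c : R) : (forall l : LF, (nodes_at_level j l)%:R <= c) ->
  expected_nodes p h j <= c.
Proof.
move=> H; rewrite /expected_nodes.
apply: (@le_trans _ _ (\sum_(l : LF) labeling_prob p l * c)).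
  apply: ler_sum => l _; apply: ler_wpM2l; [exact: wge0 | exact: H].
by rewrite -mulr_suml /labeling_prob wsum // mul1r.
Qed.

Lemma E_le_n : expected_nodes p h j <= (2 : R) ^+ (h - j).
Proof.
apply: E_le_c => l; rewrite -natrX ler_nat; exact: count_le_n.
Qed.

Lemma E_le_delta : expected_nodes p h j <= (#|O|%:R : R) ^+ m.
Proof.
apply: E_le_c => l; rewrite -natrX ler_nat; exact: count_le_delta.
Qed.

End Main.
Section Main2.
Variables (R : realType) (O : finType) (p : O -> R) (o0 : O) (h j : nat).
Hypothesis p0 : forall o, 0 <= p o.
Hypothesis p1 : \sum_(o : O) p o = 1.
Hypothesis jlt : (j < h)%N.
Local Notation N := (2 ^ h)%N.
Local Notation m := (2 ^ j)%N.
Local Notation n := (2 ^ (h - j))%N.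
Local Notation LF := ({ffun 'I_N -> O}).

Lemma p_le1 o : p o <= 1.
Proof.
rewrite -p1 (bigD1 o) //= -[X in X <= _]addr0; apply: lerD => //.
by apply: sumr_ge0.
Qed.

Lemma ent_ln : \sum_o p o * (- ln (p o)) = entropy p * ln 2.
Proof.
rewrite /entropy mulr_suml; apply: eq_bigr => o _.
have [e0|pn0] := eqVneq (p o) 0; first by rewrite e0 ?eqxx ?mul0r.
have pp : 0 < p o by rewrite lt_def pn0 p0.
rewrite /log2 lnV ?posrE // -mulrA divfK //.
by apply: lt0r_neq0; apply: ln_gt0; rewrite ltr1n.
Qed.

Lemma E_le_ent : expected_nodes p h j <= entropy p / (h - j)%:R * 2 ^+ h + 3.
Proof.
have jh : (j <= h)%N by apply: ltnW.
pose P (s : {ffun 'I_m -> O}) := \prod_k p (s k).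
have P0 s : 0 <= P s by apply: prodr_ge0.
have P1 s : P s <= 1 by apply: prodr_ile1 => k _; rewrite p0 p_le1.
pose nn : R := n%:R.
have nn1 : 1 < nn by rewrite ltr1n /nn -[1%N](expn0 2) ltn_exp2l // subn_gt0.
have L0 : 0 < ln nn by apply: ln_gt0.
pose Q (s : {ffun 'I_m -> O}) := \sum_(l : LF) labeling_prob p l * ((tos s \in Xs j l)%:R).
have step1 : expected_nodes p h j <= \sum_s Q s.
  rewrite /expected_nodes /Q exchange_big /=.
  apply: ler_sum => l _; rewrite -mulr_sumr; apply: ler_wpM2l; first exact: wge0.
  rewrite -card_sum ler_nat; exact: count_bound.
have Qle1 s : Q s <= 1.
  apply: (@le_trans _ _ (\sum_(l : LF) labeling_prob p l * 1)).
    apply: ler_sum => l _; apply: ler_wpM2l; first exact: wge0.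
    by rewrite lern1 leq_b1.
  by rewrite -mulr_suml /labeling_prob wsum // mul1r.
have QleP s : Q s <= nn * P s.
  apply: (@le_trans _ _ (\sum_(l : LF) labeling_prob p l *
      \sum_(b <- iota 0 n) ((subtrie_labels j l b == tos s)%:R))).
    apply: ler_sum => l _; apply: ler_wpM2l; first exact: wge0.
    exact: mem_le_sum.
  under eq_bigr do rewrite mulr_sumr.
  rewrite exchange_big /=.
  rewrite (@eq_big_seq _ _ _ _ _ _ (fun _ => P s)); last first.
    move=> b; rewrite mem_iota add0n => /andP [_ bn].
    exact: (block_marg o0 p1 jh s bn).
  have -> : iota 0 n = index_iota 0 n by rewrite /index_iota subn0.
  by rewrite sumr_const_nat subn0 mulr_natl.
have Qle s : Q s <= nn * P s * (- ln (P s)) / ln nn + 3 * P s.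
  have [H|H] := core (P0 s) (P1 s) nn1.
    exact: le_trans (Qle1 s) H.
  exact: le_trans (QleP s) H.
apply: (le_trans step1); apply: (le_trans (ler_sum _ (fun s _ => Qle s))).
rewrite big_split /= -mulr_sumr /P wsum // mulr1.
rewrite lerD2r.
under eq_bigr do rewrite -mulrA -mulrA.
rewrite -mulr_sumr.
under eq_bigr do rewrite mulrA mulrC.
rewrite -mulr_sumr.
rewrite string_ent // card_ord ent_ln.
have -> : ln nn = (h - j)%:R * ln 2.
  by rewrite /nn natrX lnXn ?ltr0n // mulr_natl.
have -> : (2 : R) ^+ h = nn * m%:R by rewrite /nn -natrM nmN // natrX.
have l2 : ln (2 : R) != 0 by apply: lt0r_neq0; apply: ln_gt0; rewrite ltr1n.
have hj : ((h - j)%:R : R) != 0 by rewrite pnatr_eq0 subn_eq0 -ltnNge.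
rewrite le_eqVlt; apply/orP; left; apply/eqP.
field.
by rewrite l2 hj.
Qed.

End Main2.
Unset Implicit Arguments.

Theorem corollary1 (R : realType) (O : finType) (p : O -> R) (h kstar : nat) :
  (2 <= h)%N ->
  (forall o, 0 <= p o) -> \sum_(o : O) p o = 1 ->
  (1 <= kstar <= h)%N ->
  (forall j, (1 <= j <= h)%N -> beta p h j <= beta p h kstar) ->
  forall j, (1 <= j <= h)%N ->
    2 * (h - kstar)%:R * expected_nodes p h j
      <= 2 * entropy p * 2 ^+ h + 6 * h%:R.
Proof.
move=> h2 p0 p1 /andP [k1 kh] kmax j /andP [j1 jh].
have [o0 _] : {o0 : O | true}.
  case: (pickP (fun _ : O => true)) => [o0 _|none]; first by exists o0.
  exfalso; have : \sum_(o : O) p o = 0 by rewrite big_pred0 // => o; have := none o.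
  by rewrite p1 => /eqP; rewrite oner_eq0.
have ent0 : 0 <= entropy p.
  apply: sumr_ge0 => o _; case: eqP => // /eqP pn0.
  have pp : 0 < p o by rewrite lt_def pn0 p0.
  apply: mulr_ge0 => //; apply: divr_ge0; last by apply: ln_ge0; rewrite ler1n.
  apply: ln_ge0; rewrite invf_ge1 //; exact: p_le1 p0 p1 o.
have Eb : expected_nodes p h j <= beta p h j.
  rewrite /beta; case: ifP => jlt; rewrite !le_min.
    by rewrite (E_le_ent o0 p0 p1 jlt) (E_le_n h j p0 p1) (E_le_delta o0 p0 p1 jh).
  by rewrite (E_le_n h j p0 p1) (E_le_delta o0 p0 p1 jh).
have E0 : 0 <= expected_nodes p h j.
  apply: sumr_ge0 => l _; apply: mulr_ge0; [exact: wge0 | exact: ler0n].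
have [kst|klt] := leqP h kstar.
  have -> : (h - kstar)%N = 0%N by apply/eqP; rewrite subn_eq0.
  rewrite mulr0 mul0r; apply: addr_ge0; last by rewrite mulr_ge0 // ler0n.
  by apply: mulr_ge0; [apply: mulr_ge0 | apply: exprn_ge0].
have Ebk : expected_nodes p h j <= entropy p / (h - kstar)%:R * 2 ^+ h + 3.
  apply: (le_trans Eb); apply: (le_trans (kmax j _)); first by rewrite j1 jh.
  by rewrite /beta klt ge_min lexx.
have hk0 : (0 : R) < (h - kstar)%:R by rewrite ltr0n subn_gt0.
have hkh : ((h - kstar)%:R : R) <= h%:R by rewrite ler_nat leq_subr.
have := ler_wpM2l (ltW hk0) Ebk.
rewrite mulrDr mulrA mulrCA divff ?mulr1; last by rewrite lt0r_neq0.
move=> H.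
have : 2 * (h - kstar)%:R * expected_nodes p h j <= 2 * (entropy p * 2 ^+ h + (h - kstar)%:R * 3).
  rewrite -mulrA; apply: ler_wpM2l => //. 

lra.
Qed.
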